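(* The lower Vietoris monad $H$ on $\mathbf{Top}$ is observational.
   Context: $\mathbf{Top}$ is the category of topological spaces with product topologies. $HX$ is the set of closed subsets of $X$ (including $\emptyset$) with topology generated by the sets $\{C: C\cap U\neq\emptyset\}$ for $U\subseteq X$ open; $\eta_X(x)=\overline{\{x\}}$; $\mu_X(\mathcal{C})=\overline{\bigcup_{C\in\mathcal{C}}C}$; $Hf(C)=\overline{f(C)}$; commutative monoidal structure $\nabla(C,D)=C\times D$. For a commutative monad $T$ on a cartesian monoidal category: $\mathsf{Kl}(T)$ has morphisms $f:A\rightsquigarrow B$ corresponding to $f^\sharp:A\to TB$, composition $(g\circledcirc f)^\sharp=\mu\circ T(g^\sharp)\circ f^\sharp$, tensor $\otimes$ equal to $\times$ on objects with $(f\otimes g)^\sharp=\nabla\circ(f^\sharp\times g^\sharp)$; $\mathsf{force}_A^\sharp=1_{TA}$; $\mathsf{copy}_n^\sharp=\eta\circ\Delta_n:TX\to T((TX)^n)$; $\mathsf{samp}_n=\mathsf{force}^{\otimes n}\circledcirc\mathsf{copy}_n:TX\rightsquigarrow X^{\otimes n}$. $T$ is observational if for every $X$ the family $(\mathsf{samp}_n)_{n\in\mathbb{N}}$ is jointly monic in $\mathsf{Kl}(T)$. *)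

(* Defs.v *)
From HB Require Import structures.
From mathcomp Require Import all_boot all_order.
From mathcomp Require Import mathcomp_extra boolp classical_sets functions topology.
Set Implicit Arguments. Unset Strict Implicit. Unset Printing Implicit Defensive.
Local Open Scope classical_set_scope.

(** The lower Vietoris space HX: closed subsets of X (including the empty set). *)
Record HSet (X : topologicalType) := MkH { hset :> set X; hset_closed : closed hset }.
Arguments MkH {X}.

HB.instance Definition _ (X : topologicalType) := gen_eqMixin (HSet X).
HB.instance Definition _ (X : topologicalType) := gen_choiceMixin (HSet X).

Definition lv_subbase (X : topologicalType) (U : set X) : set (HSet X) :=
  [set C : HSet X | (hset C `&` U) !=set0].

HB.instance Definition _ (X : topologicalType) :=
  isSubBaseTopological.Build (HSet X) (@open X) (@lv_subbase X).

Definition H (X : topologicalType) : topologicalType := HSet X.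

Definition hcl (X : topologicalType) (A : set X) : H X :=
  MkH (closure A) (@closed_closure X A).

Definition eta (X : topologicalType) (x : X) : H X := hcl [set x].

Definition mu (X : topologicalType) (CC : H (H X)) : H X :=
  hcl (\bigcup_(C in hset CC) hset C).

Definition Hmap (A B : topologicalType) (f : A -> B) (C : H A) : H B :=
  hcl (f @` hset C).

Definition kcomp (A B C : topologicalType) (g : B -> H C) (f : A -> H B) : A -> H C :=
  fun a => mu (Hmap g (f a)).

(** n-fold tensor power X^{⊗n}, modelled as 'I_n -> X with the product topology *)
Section tpow_def.
Import ArrowAsProduct.
Definition tpow (X : topologicalType) (n : nat) : topologicalType := ('I_n -> X).

Lemma closed_prodn' (X : topologicalType) (n : nat) (C : 'I_n -> set X) :
  (forall i, closed (C i)) -> closed ([set x : tpow X n | forall i, C i (x i)]).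
Proof.
move=> cC.
have -> : [set x : tpow X n | forall i, C i (x i)] =
  \bigcap_(i in [set: 'I_n]) (@proj 'I_n (fun _ => X) i @^-1` C i).
  by rewrite predeqE => x; split => [h i _|h i]; [exact: h|exact: h].
apply: closed_bigI => i _; apply: preimage_closed; last exact: cC.
by move=> x _; exact: (@proj_continuous _ (fun _ => X) i).
Qed.
End tpow_def.

Lemma closed_prodn (X : topologicalType) (n : nat) (C : 'I_n -> H X) :
  closed ([set x : tpow X n | forall i, hset (C i) (x i)]).
Proof. exact: (@closed_prodn' X n (fun i => hset (C i)) (fun i => @hset_closed X (C i))). Qed.

Definition nablan (X : topologicalType) (n : nat) (C : tpow (H X) n) : H (tpow X n) :=
  MkH _ (@closed_prodn X n C).

Definition copy_sharp (X : topologicalType) (n : nat) (C : H X) : H (tpow (H X) n) :=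
  eta ((fun _ : 'I_n => C) : tpow (H X) n).

Definition forcen_sharp (X : topologicalType) (n : nat) : tpow (H X) n -> H (tpow X n) :=
  fun C => nablan C.

Definition samp_sharp (X : topologicalType) (n : nat) : H X -> H (tpow X n) :=
  kcomp (@forcen_sharp X n) (@copy_sharp X n).

(* Main.v *)
Set Warnings "-all".
Require Import Defs.
From HB Require Import structures.
From mathcomp Require Import all_boot all_order finmap.
From mathcomp Require Import mathcomp_extra boolp classical_sets functions topology.
Set Implicit Arguments. Unset Strict Implicit. Unset Printing Implicit Defensive.
Local Open Scope classical_set_scope.

Lemma nbhsH (X : topologicalType) (C : H X) (N : set (H X)) : nbhs C N ->
  exists n (U : 'I_n -> set X), (forall i, open (U i) /\ (hset C `&` U i) !=set0) /\
   (forall D : H X, (forall i, (hset D `&` U i) !=set0) -> N D).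
Proof.
rewrite nbhsE => -[B [oB BC] BN].
move: oB; rewrite /open /=.
case=> Dp sDp eB; subst B. case: BC => i Dpi iC. have [F sF eF] := sDp i Dpi.
subst i.
pose s := enum_fset F.
exists (size s), (fun i => nth setT s i).
have hin : forall i : 'I_(size s), nth setT s i \in F.
  by move=> i; apply: mem_nth.
split.
  move=> j; split; first by have := sF _ (hin j); rewrite inE.
  by apply: (iC); exact: hin.
move=> D hD; apply: BN; exists (\bigcap_(i in [set` F]) lv_subbase i) => //.
move=> U UF.
have UF' : U \in s by exact: UF.
have Ui : index U s < size s by rewrite index_mem.
have := hD (Ordinal Ui); rewrite /= nth_index //.
Qed.

Lemma open_subbase (X : topologicalType) (U : set X) : open U -> open (@lv_subbase X U).
Proof.
move=> oU; rewrite /open /=.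
exists [set lv_subbase U].
  by move=> _ ->; apply: finI_from1.
by rewrite bigcup_set1.
Qed.

Lemma closure_open_meet (Y : topologicalType) (A O : set Y) :
  open O -> (closure A `&` O) !=set0 -> (A `&` O) !=set0.
Proof.
move=> oO [p [cp Op]]; apply: cp; exact: open_nbhs_nbhs.
Qed.

Section prodlemmas.
Import ArrowAsProduct.

Lemma open_prod (X : topologicalType) n (U : 'I_n -> set X) :
  (forall i, open (U i)) -> open ([set y : tpow X n | forall i, U i (y i)]).
Proof.
move=> oU; rewrite openE => y Py.
have : \forall z \near y, forall i, U i (z i).
  apply: (@filter_forall (tpow X n) (ordinal n) (fun i => [set z : tpow X n | U i (z i)]) (nbhs y) _) => i.
  apply: (@proj_continuous _ (fun _ => X) i y).
  apply: open_nbhs_nbhs; split; [exact: oU | exact: Py].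
by [].
Qed.

Lemma open_proj_subbase (X : topologicalType) n (i : 'I_n) (V : set X) :
  open V -> open [set Z : tpow (H X) n | (hset (Z i) `&` V) !=set0].
Proof.
move=> oV.
have -> : [set Z : tpow (H X) n | (hset (Z i) `&` V) !=set0] =
  (@proj 'I_n (fun _ => H X) i) @^-1` (lv_subbase V) by [].
apply: open_comp; last exact: open_subbase.
by move=> z _; exact: (@proj_continuous _ (fun _ => H X) i).
Qed.
End prodlemmas.

Lemma kcomp_in (Y Z : topologicalType) (s : Y -> H Z) (F : H Y) C y :
  hset F C -> hset (s C) y -> hset (mu (Hmap s F)) y.
Proof.
move=> FC sy; apply: subset_closure; exists (s C) => //.
by apply: subset_closure; exists C.
Qed.

Lemma kcomp_out (Y Z : topologicalType) (s : Y -> H Z) (F : H Y) (O : set Z) :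
  open O -> (hset (mu (Hmap s F)) `&` O) !=set0 ->
  exists C, hset F C /\ (hset (s C) `&` O) !=set0.
Proof.
move=> oO /(closure_open_meet oO) [y [[K KF Ky] Oy]].
have : (closure (s @` hset F) `&` lv_subbase O) !=set0.
  by exists K; split => //; exists y.
move=> /(closure_open_meet (open_subbase oO)) [_ [[C FC <-] sC]].
by exists C.
Qed.

Lemma samp_in (X : topologicalType) n (C : H X) (x : tpow X n) :
  (forall i, hset C (x i)) -> hset (samp_sharp n C) x.
Proof.
move=> hx; apply: (@kcomp_in _ _ (@forcen_sharp X n) _ (fun _ => C)) => //.
by apply: subset_closure.
Qed.

Lemma copy_out (X : topologicalType) n (D : H X) (Zs : tpow (H X) n) i (V : set X) :
  open V -> hset (copy_sharp n D) Zs -> (hset (Zs i) `&` V) !=set0 ->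
  (hset D `&` V) !=set0.
Proof.
move=> oV cZ ZV.
have := cZ _ (open_nbhs_nbhs (conj (open_proj_subbase i oV) ZV)).
by move=> [_ [-> ]].
Qed.

Lemma hset_inj (Y : topologicalType) (F G : H Y) : hset F = hset G -> F = G.
Proof.
case: F G => F cF [G cG] /= e; subst G; congr MkH; exact: Prop_irrelevance.
Qed.

Lemma key (X : topologicalType) (F G : H (H X)) :
  (forall n, mu (Hmap (@samp_sharp X n) F) = mu (Hmap (@samp_sharp X n) G)) ->
  hset F `<=` hset G.
Proof.
move=> hFG C FC.
have -> : hset G = closure (hset G) by apply/closure_id; exact: hset_closed.
move=> N nN.
have [n [U [hU hN]]] := nbhsH nN.
have [x hx] := choice (fun i => proj2 (hU i)).
pose P := [set y : tpow X n | forall i, U i (y i)].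
have oP : open P by apply: open_prod => i; exact: (proj1 (hU i)).
have : (hset (mu (Hmap (@samp_sharp X n) F)) `&` P) !=set0.
  exists x; split; last by move=> i; exact: (proj2 (hx i)).
  apply: (@kcomp_in _ _ _ _ C) => //; apply: samp_in => i; exact: (proj1 (hx i)).
rewrite hFG => /(kcomp_out oP) [D [GD]].
move=> /(kcomp_out oP) [Zs [cZ]].
move=> [y [Zy Py]].
exists D; split => //; apply: hN => i.
apply: (@copy_out _ n D Zs i) => //; first exact: (proj1 (hU i)).
by exists (y i); split; [exact: Zy | exact: Py].
Qed.

Theorem theorem9p4 (X A : topologicalType) (f g : A -> H (H X)) :
  continuous f -> continuous g ->
  (forall n : nat, kcomp (@samp_sharp X n) f = kcomp (@samp_sharp X n) g) ->
  f = g.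
Proof.
move=> _ _ h; apply: funext => a; apply: hset_inj.
rewrite eqEsubset; split; apply: key => n.
  exact: (congr1 (fun k => k a) (h n)).
exact: (esym (congr1 (fun k => k a) (h n))).
Qed.
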